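(* Let $G_w$ be a half wheel graph with center $w_c$ and outer nodes $w_1,\dots,w_n$, i.e., a directed graph on these nodes with exactly one edge (of arbitrary orientation) between $w_c$ and $w_k$ for each $k\in\{1,\dots,n\}$ and exactly one edge (of arbitrary orientation) between $w_k$ and $w_{k+1}$ for each $k\in\{1,\dots,n-1\}$. Let $G^{\mathcal X}_w$ be any extraction order of $G_w$ rooted at $w_c$, and let $\mathrm{VC}=\{w_k:(w_{k-1},w_k)\in E^{\mathcal X}_w\text{ or }(w_{k+1},w_k)\in E^{\mathcal X}_w\}$. Then $\mathrm{ew}_{\mathcal X}(G^{\mathcal X}_w)=|\mathrm{VC}|+1$.
   Context: An extraction order of a directed graph $G=(V,E)$ is a rooted directed acyclic graph $G^{\mathcal X}=(V,E^{\mathcal X},s)$ in which every node is reachable from $s$ and $E^{\mathcal X}$ is obtained from $E$ by reversing some (possibly no) edges. A confluence from $a$ to $b$ is a pair of directed paths in $E^{\mathcal X}$ from $a$ to $b$ sharing no node other than $a,b$. For $e\in E^{\mathcal X}$, its label set $\mathcal L_e$ is the set of nodes $b$ such that $e$ lies on some confluence with target $b$. Each node's outgoing edges are partitioned into bags: classes of the equivalence relation generated by $e\sim e'$ iff $\mathcal L_e\cap\mathcal L_{e'}\neq\emptyset$; bag label set $\mathcal L_B=\bigcup_{e\in B}\mathcal L_e$. The extraction width is $\mathrm{ew}_{\mathcal X}(G^{\mathcal X})=1+\max|\mathcal L_B|$ over all bags of all nodes. *)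

(* Defs.v *)
From mathcomp Require Import all_boot.
From mathcomp Require Import boolp.
Set Implicit Arguments. Unset Strict Implicit. Unset Printing Implicit Defensive.

Section ExtractionWidth.
Variable V : finType.

Definition acyclic (EX : rel V) : Prop :=
  forall x y, EX x y -> ~~ connect EX y x.

(** EX is an extraction order of (V,E) rooted at s: EX is obtained from E by
    reversing some set R of edges of E, EX is acyclic and every node is
    reachable from s. *)
Definition extraction_order (E EX : rel V) (s : V) : Prop :=
  [/\ exists R : rel V, (forall x y, R x y -> E x y) /\
        (forall x y, EX x y = (E x y && ~~ R x y) || (E y x && R y x)),
      acyclic EX &
      forall x, connect EX s x].

Definition dpath (EX : rel V) (a b : V) (p : seq V) : bool :=
  path EX a p && (last a p == b).

Definition confluence (EX : rel V) (a b : V) (p1 p2 : seq V) : Prop :=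
  [/\ a != b, dpath EX a b p1, dpath EX a b p2, p1 != p2 &
      forall x, x \in a :: p1 -> x \in a :: p2 -> (x == a) || (x == b)].

Definition edge_on (a : V) (p : seq V) (u v : V) : Prop :=
  exists s1 s2, a :: p = s1 ++ u :: v :: s2.

Definition labels (EX : rel V) (u v : V) : {set V} :=
  [set b | `[< exists a p1 p2, confluence EX a b p1 p2 /\
                 (edge_on a p1 u v \/ edge_on a p2 u v) >]].

(** Relation on outgoing edges of u (identified by their heads):
    label sets intersect. *)
Definition overlap (EX : rel V) (u : V) : rel V :=
  fun v v' => [&& EX u v, EX u v' & [exists b, (b \in labels EX u v) && (b \in labels EX u v')]].

(** The bag of u containing the outgoing edge (u,v): its class under the
    equivalence generated by overlap (reflexive-transitive closure of a
    symmetric relation). *)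
Definition bag (EX : rel V) (u v : V) : {set V} :=
  [set v' | connect (overlap EX u) v v'].

Definition bag_labels (EX : rel V) (u v : V) : {set V} :=
  \bigcup_(v' in bag EX u v) labels EX u v'.

Definition ew (EX : rel V) : nat :=
  1 + \max_(u : V) \max_(v | EX u v) #|bag_labels EX u v|.

End ExtractionWidth.

(** Half wheel on n outer nodes: vertex type option 'I_n, with None = w_c
    and Some k = w_(k+1). *)
Definition hw_adj (n : nat) (x y : option 'I_n) : bool :=
  match x, y with
  | None, Some _ | Some _, None => true
  | Some k, Some l => (k.+1 == l :> nat) || (l.+1 == k :> nat)
  | None, None => false
  end.

Definition half_wheel (n : nat) (E : rel (option 'I_n)) : Prop :=
  [/\ forall k : 'I_n, E None (Some k) != E (Some k) None,
      forall k l : 'I_n, k.+1 = l :> nat -> E (Some k) (Some l) != E (Some l) (Some k) &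
      forall x y, E x y -> hw_adj x y].

Definition VC (n : nat) (EX : rel (option 'I_n)) : {set 'I_n} :=
  [set k : 'I_n | [exists l : 'I_n,
     ((l.+1 == k :> nat) || (k.+1 == l :> nat)) && EX (Some l) (Some k)]].

(* Main.v *)
Require Import Defs.
From mathcomp Require Import all_boot.
From mathcomp Require Import boolp.

Lemma hw_adj_sym n (x y : option 'I_n) : hw_adj x y = hw_adj y x.
Proof. by case: x; case: y => //= a b; rewrite orbC. Qed.

Theorem lemma36 (n : nat) (E EX : rel (option 'I_n)) :
  half_wheel E -> extraction_order E EX None ->
  ew EX = #|VC EX| + 1.
Proof.
case=> H1 H2 H3 [[R [HRE HR]] Hac Hreach].
have EXsym : forall x y, E x y -> EX x y || EX y x.
  move=> x y Exy; rewrite !HR Exy /=; case: (R x y); by rewrite ?orbT.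
have EXadj : forall x y, EX x y -> hw_adj x y.
  move=> x y; rewrite HR => /orP [] /andP [H _]; first exact: H3.
  by rewrite hw_adj_sym; apply: H3.
have noinN : forall x, ~~ EX x None.
  move=> x; apply/negP => H; have := Hac _ _ H; by rewrite Hreach.
have EXN : forall k, EX None (Some k).
  move=> k; move: (H1 k); case eN: (E None (Some k)); case eS: (E (Some k) None) => // _.
    by have := EXsym _ _ eN; rewrite (negbTE (noinN _)) orbF.
  by have := EXsym _ _ eS; rewrite (negbTE (noinN _)).
have conf : forall s t, EX (Some s) (Some t) ->
    Some t \in labels EX None (Some s) /\ Some t \in labels EX None (Some t).
  move=> s t Hst.
  have C : confluence EX None (Some t) [:: Some s; Some t] [:: Some t].
    split => //.
    - by rewrite /dpath /= Hst eqxx !andbT; apply: EXN.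
    - by rewrite /dpath /= eqxx !andbT; apply: EXN.
    - by apply/eqP => /(congr1 size).
    - by move=> x _ H; rewrite !inE in H.
  rewrite !inE; split; apply/asboolP;
    exists None, [:: Some s; Some t], [:: Some t]; split => //.
    by left; exists [::], [:: Some t].
  by right; exists [::], [::].
have predl : forall a b p, dpath EX a b p -> a != b ->
    b != None /\ (p = [:: b] \/ exists l, EX (Some l) b).
  move=> a b p; case/lastP: p => [|q y].
    by rewrite /dpath /= => /eqP ->; rewrite eqxx.
  rewrite /dpath rcons_path last_rcons => /andP [/andP [Hq Hy] /eqP eyb] _.
  subst y; split.
    by apply/negP => /eqP eb; subst b; move: Hy; rewrite (negbTE (noinN _)).
  move: Hq Hy; case/lastP: q => [|q' x]; first by left.
  rewrite rcons_path last_rcons => /andP [_ Hx]; case: x Hx => [l|] Hx Hb.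
    by right; exists l.
  by move: Hx; rewrite (negbTE (noinN _)).
have upper : forall u v b, b \in labels EX u v -> exists2 k, b = Some k & k \in VC EX.
  move=> u v b; rewrite inE => /asboolP [a [p1 [p2 [[Hab Hd1 Hd2 Hne _] _]]]].
  have [bN [e1|[l Hl]]] := predl _ _ _ Hd1 Hab.
    have [_ [e2|[l Hl]]] := predl _ _ _ Hd2 Hab.
      by move: Hne; rewrite e1 e2 eqxx.
    case: b bN Hl {Hd1 Hd2 Hab Hne e1} => [k|] // _ Hl; exists k => //.
    by rewrite inE; apply/existsP; exists l; rewrite Hl andbT; apply: (EXadj _ _ Hl).
  case: b bN Hl {Hd1 Hd2 Hab Hne} => [k|] // _ Hl; exists k => //.
  by rewrite inE; apply/existsP; exists l; rewrite Hl andbT; apply: (EXadj _ _ Hl).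
have ovl : forall j j' : 'I_n, j.+1 = j' :> nat -> overlap EX None (Some j) (Some j').
  move=> j j' e; rewrite /overlap !EXN /=; apply/existsP.
  have : EX (Some j) (Some j') || EX (Some j') (Some j).
    move: (H2 j j' e); case e1: (E (Some j) (Some j')); case e2: (E (Some j') (Some j)) => // _.
      exact: EXsym.
    by rewrite orbC; apply: EXsym.
  case/orP => H.
    by have [A B] := conf _ _ H; exists (Some j'); rewrite A B.
  by have [A B] := conf _ _ H; exists (Some j); rewrite A B.
rewrite /ew addnC; congr (_ + _); apply/eqP; rewrite eqn_leq; apply/andP; split.
  apply/bigmax_leqP => u _; apply/bigmax_leqP => v _.
  rewrite -[#|VC EX|](card_imset _ (@Some_inj _)); apply: subset_leq_card.
  apply/subsetP => b /bigcupP [v' _ Hb]; have [k -> Hk] := upper _ _ _ Hb.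
  by apply/imsetP; exists k.
case: (set_0Vmem (VC EX)) => [-> | [k0 Hk0]]; first by rewrite cards0.
have n0 : 0 < n by apply: leq_ltn_trans (leq0n k0) (ltn_ord k0).
pose z : 'I_n := Ordinal n0.
have chain : forall m (Hm : m < n), connect (overlap EX None) (Some z) (Some (Ordinal Hm)).
  elim=> [|m IH] Hm.
    by have -> : Ordinal Hm = z by apply: val_inj.
  apply: connect_trans (IH (ltnW Hm)) (connect1 _); exact: ovl.
apply: (leq_trans _ (leq_bigmax None)).
apply: (leq_trans _ (leq_bigmax_cond _ (EXN z))).
rewrite -[#|VC EX|](card_imset _ (@Some_inj _)); apply: subset_leq_card.
apply/subsetP => b /imsetP [k Hk ->].
move: Hk; rewrite inE => /existsP [l /andP [_ Hl]].
apply/bigcupP; exists (Some k); last by case: (conf _ _ Hl).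
rewrite inE; have -> : k = Ordinal (ltn_ord k) by apply: val_inj.
exact: chain.
Qed.
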